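(* Let $G$ be a nice graph of size $m$ and maximum degree $\Delta$. (1) If $x$ is the minimum label sum of a proper labelling of $G$, then $x \leq {\rm ML}^{\rm W}(G)+m \leq 3(m+\Delta x)$. (2) $\chi'_{\rm s}(G) \leq {\rm ME}^{\rm W}(G)+1 \leq 3(1+\Delta\chi'_{\rm s}(G))$. (3) If $x$ is the minimum vertex sum of a proper labelling of $G$, then $x \leq {\rm MV}^{\rm W}(G)+\Delta \leq 3\Delta(1+x)$.
   Context: All graphs are finite and simple. A walk of a graph $G$ is a sequence of vertices $u_0u_1\dots u_p$ with $u_tu_{t+1}\in E(G)$ for all $t$ (vertices and edges may repeat); its length is $p$. For a walk $W$ of $G$, $G+W$ is the multigraph on $V(G)$ whose edge multiset consists of $E(G)$ together with each edge added as many times as $W$ traverses it. A multigraph is locally irregular if no two adjacent vertices have the same degree; $W$ is irregularising if $G+W$ is locally irregular. A graph is nice if it is connected and not isomorphic to $K_2$. ${\rm ML}^{\rm W}(G)$ is the minimum length of an irregularising walk of $G$; ${\rm ME}^{\rm W}(G)$ is the minimum, over irregularising walks $W$, of the maximum number of times $W$ traverses an edge; ${\rm MV}^{\rm W}(G)$ is the minimum, over irregularising walks $W$, of the maximum over vertices $v$ of the number of edges of $W$ (with multiplicity) incident to $v$. A labelling of $G$ is a map $\ell:E(G)\to\{1,2,\dots\}$; for a vertex $u$, $\sigma_\ell(u)=\sum_{v\in N(u)}\ell(uv)$; $\ell$ is proper if $\sigma_\ell(u)\ne\sigma_\ell(v)$ for all $uv\in E(G)$. $\chi'_{\rm s}(G)$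 is the smallest $k$ such that $G$ has a proper labelling with labels in $\{1,\dots,k\}$. The label sum of $\ell$ is $\sum_{e\in E(G)}\ell(e)$; the vertex sum of $\ell$ is $\max_{u\in V(G)}\sigma_\ell(u)$; the minimum label sum (resp. minimum vertex sum) of a proper labelling of $G$ is the minimum of these quantities over proper labellings of $G$. *)

(* Defs.v *)
(* A simple graph: a symmetric irreflexive relation e on a finType T. *)
From mathcomp Require Import all_boot.
Set Implicit Arguments. Unset Strict Implicit. Unset Printing Implicit Defensive.

Section Defs.
Variables (T : finType) (e : rel T).

(* connected (and nonempty) and not isomorphic to K2 *)
Definition connected_graph : Prop := 0 < #|T| /\ forall x y : T, connect e x y.
Definition nice : Prop := connected_graph /\ #|T| <> 2.

Definition deg (v : T) : nat := #|[set w | e v w]|.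
Definition maxdeg : nat := \max_(v : T) deg v.

Definition is_edge (A : {set T}) : bool := [exists a, exists b, e a b && (A == [set a; b])].
Definition size_m : nat := #|[set A : {set T} | is_edge A]|.

(* Walks: a walk u_0 u_1 ... u_p is given by u0 and s = [:: u_1; ...; u_p], with path e u0 s;
   its length is p = size s. *)
Definition steps (u0 : T) (s : seq T) : seq (T * T) := zip (u0 :: s) s.
Definition wdeg (u0 : T) (s : seq T) (v : T) : nat :=
  count (fun p : T * T => (p.1 == v) || (p.2 == v)) (steps u0 s).
Definition traversals (u0 : T) (s : seq T) (a b : T) : nat :=
  count (fun p : T * T => (p == (a, b)) || (p == (b, a))) (steps u0 s).

(* degree of v in the multigraph G + W is deg v + wdeg u0 s v *)
Definition irregularising (u0 : T) (s : seq T) : Prop :=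
  path e u0 s /\ forall x y, e x y -> deg x + wdeg u0 s x <> deg y + wdeg u0 s y.

Definition walk_maxedge (u0 : T) (s : seq T) : nat :=
  \max_(a : T) \max_(b | e a b) traversals u0 s a b.
Definition walk_maxvert (u0 : T) (s : seq T) : nat :=
  \max_(v : T) wdeg u0 s v.

Definition is_min_over_walks (f : T -> seq T -> nat) (n : nat) : Prop :=
  (exists u0 s, irregularising u0 s /\ f u0 s = n) /\
  (forall u0 s, irregularising u0 s -> n <= f u0 s).

Definition is_MLW := is_min_over_walks (fun _ s => size s).
Definition is_MEW := is_min_over_walks walk_maxedge.
Definition is_MVW := is_min_over_walks walk_maxvert.

(* Labellings: l : {set T} -> nat, only its values on edges matter; labels are >= 1. *)
Definition sigma (l : {set T} -> nat) (u : T) : nat := \sum_(v | e u v) l [set u; v].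
Definition labelling (l : {set T} -> nat) : Prop := forall A, is_edge A -> 0 < l A.
Definition proper (l : {set T} -> nat) : Prop :=
  labelling l /\ forall u v, e u v -> sigma l u <> sigma l v.
Definition label_sum (l : {set T} -> nat) : nat := \sum_(A : {set T} | is_edge A) l A.
Definition vertex_sum (l : {set T} -> nat) : nat := \max_(u : T) sigma l u.
Definition bounded_by (k : nat) (l : {set T} -> nat) : Prop := forall A, is_edge A -> l A <= k.

Definition is_chi_s (k : nat) : Prop :=
  (exists l, proper l /\ bounded_by k l) /\
  (forall k' l, proper l -> bounded_by k' l -> k <= k').
Definition is_min_label_sum (x : nat) : Prop :=
  (exists l, proper l /\ label_sum l = x) /\ (forall l, proper l -> x <= label_sum l).
Definition is_min_vertex_sum (x : nat) : Prop :=
  (exists l, proper l /\ vertex_sum l = x) /\ (forall l, proper l -> x <= vertex_sum l).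

End Defs.

(* Main.v *)
Require Import Defs.
From mathcomp Require Import all_boot zify.
From Stdlib Require Import Classical.
Set Implicit Arguments. Unset Strict Implicit. Unset Printing Implicit Defensive.

Section Walks.
Variables (T : finType) (e : rel T).
Hypothesis e_sym : symmetric e.
Hypothesis e_irr : irreflexive e.
Implicit Types (x y u v a b p q w : T) (s : seq T).

Lemma steps_cons x y s : steps x (y :: s) = (x, y) :: steps y s.
Proof. by []. Qed.

Lemma steps_cat x s1 s2 : steps x (s1 ++ s2) = steps x s1 ++ steps (last x s1) s2.
Proof. by elim: s1 x => [|y s1 IH] x //=; rewrite !steps_cons IH. Qed.

Lemma mem_steps x s p q : (p, q) \in steps x s -> (p \in x :: s) /\ (q \in s).
Proof.
elim: s x => [|y s IH] x //=. rewrite steps_cons inE => /orP [/eqP [-> ->]|].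
  by rewrite !inE !eqxx /=.
move=> /IH [h1 h2]; split; rewrite !inE ?h1 ?h2 ?orbT //.
by move: h1; rewrite inE => ->; rewrite orbT.
Qed.

Lemma sum_eq1 (I : finType) (P : pred I) (x : I) :
  \sum_(i | P i) (x == i : nat) = P x.
Proof.
case Px: (P x).
  rewrite (bigD1 x) //= eqxx big1 // => i /andP [_ ne]; by rewrite eq_sym (negbTE ne).
by rewrite big1 // => i Pi; case: eqP => // ex; rewrite ex Pi in Px.
Qed.

Lemma traversals_sym x s a b : traversals x s a b = traversals x s b a.
Proof. by apply: eq_count => p; rewrite orbC. Qed.

Lemma wdeg_sum u s v : path e u s ->
  wdeg u s v = \sum_(y | e v y) traversals u s v y.
Proof.
elim: s u => [|y s IH] u /=.
  by move=> _; rewrite /wdeg /traversals /= big1.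
move=> /andP [euy ps].
rewrite /wdeg /traversals steps_cons /= -/(wdeg y s v).
under eq_bigr do rewrite -/(traversals y s v _).
rewrite big_split /= -IH //. congr (_ + _).
have neq : u != y by apply/negP => /eqP E; rewrite E e_irr in euy.
have E : forall z, ((u, y) == (v, z)) || ((u, y) == (z, v)) =
   ((u == v) && (y == z)) || ((y == v) && (u == z)).
  by move=> z; rewrite !xpair_eqE [(u == z) && _]andbC.
under eq_bigr do rewrite E.
case: (eqVneq u v) => [<-|nv] /=.
  under eq_bigr do rewrite [y == u]eq_sym (negbTE neq) andFb orbF.
  by rewrite sum_eq1 euy.
case: (eqVneq y v) => [<-|nyv] /=.
  by rewrite sum_eq1 e_sym euy.
by rewrite big1.
Qed.

Definition trS u s (A : {set T}) : nat :=
  count (fun p : T * T => [set p.1; p.2] == A) (steps u s).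

Lemma set2_eqE x y a b : a != b ->
  ([set x; y] == [set a; b]) = ((x, y) == (a, b)) || ((x, y) == (b, a)).
Proof.
move=> nab.
case: (boolP ((x, y) == (a, b))) => [/eqP[-> ->]|n1]; first by rewrite eqxx.
case: (boolP ((x, y) == (b, a))) => [/eqP[-> ->]|n2]; first by rewrite setUC eqxx.
apply/negbTE/negP => /eqP E.
have ha : a \in [set x; y] by rewrite E set21.
have hb : b \in [set x; y] by rewrite E set22.
have hx : x \in [set a; b] by rewrite -E set21.
have hy : y \in [set a; b] by rewrite -E set22.
move: hx hy; rewrite !in_set2 => hx hy.
move: ha hb n1 n2 nab; rewrite !in_set2.
case/orP: hx => /eqP ->; case/orP: hy => /eqP ->; rewrite ?eqxx //=.
- by rewrite orbb => _ /eqP ->; rewrite eqxx.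
- by rewrite orbb => /eqP ->; rewrite eqxx.
Qed.

Lemma trS_trav u s a b : a != b -> trS u s [set a; b] = traversals u s a b.
Proof. by move=> nab; apply: eq_count => p; rewrite set2_eqE //; case: p. Qed.

Lemma is_edge2 a b : e a b -> is_edge e [set a; b].
Proof. by move=> eab; apply/existsP; exists a; apply/existsP; exists b; rewrite eab eqxx. Qed.

Lemma size_trS u s : path e u s -> size s = \sum_(A | is_edge e A) trS u s A.
Proof.
elim: s u => [|y s IH] u /=.
  by move=> _; rewrite big1.
move=> /andP [euy ps].
rewrite /trS steps_cons /=.
under eq_bigr do rewrite -/(trS y s _).
by rewrite big_split /= -IH // sum_eq1 is_edge2.
Qed.

Definition dlt a b x y : bool := ((x == a) && (y == b)) || ((x == b) && (y == a)).

Lemma detour u s a b : path e u s -> a \in u :: s -> e a b ->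
  exists s', path e u s' /\
    forall x y, traversals u s' x y = traversals u s x y + 2 * dlt a b x y.
Proof.
move=> ps ha eab; move: ps; case/splitPl: ha => s1 s2 la ps.
exists (s1 ++ [:: b, a & s2]); split.
  by move: ps; rewrite !cat_path la /= eab e_sym eab /=.
move=> x y; rewrite /traversals !steps_cat !count_cat la !steps_cons /=.
have E1 : ((a, b) == (x, y)) || ((a, b) == (y, x)) = dlt a b x y.
  by rewrite /dlt !xpair_eqE; do !case: eqP => //=; move=> *; subst.
have E2 : ((b, a) == (x, y)) || ((b, a) == (y, x)) = dlt a b x y.
  by rewrite /dlt !xpair_eqE; do !case: eqP => //=; move=> *; subst.
rewrite E1 E2; lia.
Qed.

Lemma trav_notin u s p q : q \notin u :: s -> traversals u s p q = 0.
Proof.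
move=> hq; apply/eqP; rewrite -leqn0 leqNgt -has_count; apply/hasPn => [[x y]] /mem_steps [hx hy].
apply/negP => /orP [/eqP [_ ey]|/eqP [ex _]].
  by rewrite -ey inE hy orbT in hq.
by rewrite -ex hx in hq.
Qed.

Section Loop.
Variable c : T -> T -> nat.
Hypothesis csym : forall a b, c a b = c b a.
Hypothesis cpos : forall a b, e a b -> 0 < c a b.
Hypothesis conn : forall x y, connect e x y.

Definition Dm u s := \sum_a \sum_(b | e a b) (2 * c a b - traversals u s a b).

Lemma loop u n : forall s, Dm u s < n -> path e u s ->
  (forall a b, e a b -> exists t, t <= c a b /\ traversals u s a b = 2 * t) ->
  exists s', path e u s' /\ forall a b, e a b -> traversals u s' a b = 2 * c a b.
Proof.
elim: n => [//|n IH] s hD ps hinv.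
case: (boolP [exists a, exists b, (a \in u :: s) && e a b && (traversals u s a b < 2 * c a b)]).
- move=> /existsP [a /existsP [b /andP [/andP [ha eab] lt]]].
  have [s' [ps' htr]] := detour ps ha eab.
  have inv' : forall x y, e x y -> exists t, t <= c x y /\ traversals u s' x y = 2 * t.
    move=> x y exy; rewrite htr.
    case dl: (dlt a b x y).
    - have [t [tc ht]] := hinv a b eab.
      have [ex ey] : traversals u s x y = traversals u s a b /\ c x y = c a b.
        move: dl; rewrite /dlt => /orP [/andP [/eqP -> /eqP ->]|/andP [/eqP -> /eqP ->]] //.
        by rewrite traversals_sym csym.
      exists t.+1; rewrite ex ey ht; rewrite ht in lt; split; lia.
    - have [t [tc ht]] := hinv x y exy; exists t; rewrite ht; split; lia.
  apply: (IH s') => //.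
  have eqD : Dm u s = Dm u s' + 2 * \sum_x \sum_(y | e x y) (dlt a b x y : nat).
    rewrite /Dm big_distrr -big_split; apply: eq_bigr => x _.
    rewrite big_distrr -big_split; apply: eq_bigr => y exy /=.
    have [t [tc ht]] := inv' x y exy; move: ht; rewrite htr => ht; lia.
  have ge1 : 0 < \sum_x \sum_(y | e x y) (dlt a b x y : nat).
    rewrite (bigD1 a) //= (bigD1 b) //= /dlt !eqxx /=; lia.
  lia.
- move=> /negP hno.
  have cl : forall p q, e p q -> p \in u :: s -> q \in u :: s.
    move=> p q epq hp; apply/negPn/negP => hq; apply: hno.
    apply/existsP; exists p; apply/existsP; exists q.
    by rewrite hp epq trav_notin // muln_gt0 cpos.
  have gen : forall z (r : seq T), z \in u :: s -> path e z r -> last z r \in u :: s.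
    move=> z r; elim: r z => [|y r IHp] z //= hz /andP [ezy pp].
    exact: IHp (cl _ _ ezy hz) pp.
  have allin : forall x, x \in u :: s.
    move=> x; have /connectP [r pp ->] := conn u x.
    by apply: gen => //; rewrite mem_head.
  exists s; split => // a b eab.
  have [t [tc ht]] := hinv a b eab.
  have : ~~ (traversals u s a b < 2 * c a b).
    apply/negP => lt; apply: hno; apply/existsP; exists a; apply/existsP; exists b.
    by rewrite allin eab lt.
  rewrite ht; lia.
Qed.

Lemma walk_exists u : exists s, path e u s /\
  forall a b, e a b -> traversals u s a b = 2 * c a b.
Proof.
apply: (@loop u (Dm u [::]).+1 [::]) => // a b _.
by exists 0; split.
Qed.
End Loop.

Lemma edgeP (A : {set T}) : is_edge e A -> exists a b, e a b /\ A = [set a; b].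
Proof. by move=> /existsP [a /existsP [b /andP [eab /eqP ->]]]; exists a, b. Qed.

Lemma neq_of_e a b : e a b -> a != b.
Proof. by move=> eab; apply/negP => /eqP E; rewrite E e_irr in eab. Qed.

Definition lw u s (A : {set T}) : nat := (trS u s A).+1.

Lemma deg_sum v : deg e v = \sum_(w | e v w) 1.
Proof. rewrite /deg -sum1_card; apply: eq_bigl => w; by rewrite inE. Qed.

Lemma lw_sigma u s v : path e u s -> sigma e (lw u s) v = deg e v + wdeg u s v.
Proof.
move=> ps; rewrite /sigma /lw wdeg_sum // deg_sum -big_split /=.
apply: eq_bigr => w evw; rewrite trS_trav ?neq_of_e //; lia.
Qed.

Lemma lw_proper u s : irregularising e u s -> Defs.proper e (lw u s).
Proof.
move=> [ps hir]; split; first by move=> A _; rewrite /lw.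
by move=> x y exy; rewrite !lw_sigma //; apply: hir.
Qed.

Lemma lw_sum u s : path e u s -> label_sum e (lw u s) = size_m e + size s.
Proof.
move=> ps; rewrite /label_sum /lw (size_trS ps) /size_m -sum1_card.
have -> : \sum_(A in [set A | is_edge e A]) 1 = \sum_(A | is_edge e A) 1.
  by apply: eq_bigl => A; rewrite inE.
by rewrite -big_split /=; apply: eq_bigr => A _; lia.
Qed.

Lemma lw_bounded u s : path e u s -> bounded_by e (walk_maxedge e u s + 1) (lw u s).
Proof.
move=> ps A /edgeP [a [b [eab ->]]]; rewrite /lw trS_trav ?neq_of_e // addn1 ltnS.
rewrite /walk_maxedge.
apply: leq_trans (leq_bigmax_cond (P := e a) (F := traversals u s a) b eab) _.
exact: (leq_bigmax (F := fun a => \max_(b | e a b) traversals u s a b) a).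
Qed.

Lemma lw_vsum u s : path e u s -> vertex_sum e (lw u s) <= maxdeg e + walk_maxvert u s.
Proof.
move=> ps; apply/bigmax_leqP => v _; rewrite lw_sigma //.
by apply: leq_add; apply: leq_bigmax.
Qed.

Lemma ex_min (P : nat -> Prop) : (exists n, P n) -> exists n, P n /\ forall m, P m -> n <= m.
Proof.
move=> [n Pn]; elim/ltn_ind: n Pn => n IH Pn.
case: (classic (exists m, m < n /\ P m)) => [[m [lt Pm]]|no]; first exact: IH lt Pm.
exists n; split => // m Pm; rewrite leqNgt; apply/negP => lt; apply: no; by exists m.
Qed.

Lemma min_walk (f : T -> seq T -> nat) : (exists u s, irregularising e u s) ->
  exists n, is_min_over_walks e f n.
Proof.
move=> [u [s ir]].
have [n [[u' [s' [ir' fn]]] hmin]] :=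
  @ex_min (fun n => exists u s, irregularising e u s /\ f u s = n) (ex_intro _ _ (ex_intro _ u (ex_intro _ s (conj ir erefl)))).
exists n; split; first by exists u', s'.
by move=> u1 s1 ir1; apply: hmin; exists u1, s1.
Qed.

Lemma from_labelling (conn : forall x y, connect e x y) u (l : {set T} -> nat) :
  Defs.proper e l ->
  exists s, irregularising e u s /\ size s = 2 * maxdeg e * label_sum e l /\
   (forall k, bounded_by e k l -> walk_maxedge e u s <= 2 * maxdeg e * k) /\
   walk_maxvert u s <= 2 * maxdeg e * vertex_sum e l.
Proof.
move=> [lab pr]; set D := maxdeg e.
have degD v : deg e v <= D by exact: (leq_bigmax (F := deg e) v).
have deg1 a b : e a b -> 0 < deg e a by move=> eab; apply/card_gt0P; exists b; rewrite inE.
have csym : forall a b, D * l [set a; b] = D * l [set b; a] by move=> a b; rewrite setUC.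
have cpos : forall a b, e a b -> 0 < D * l [set a; b].
  by move=> a b eab; rewrite muln_gt0 (leq_trans (deg1 a b eab) (degD a)) lab // is_edge2.
have [s [ps htr]] := walk_exists csym cpos conn u.
have hw v : wdeg u s v = 2 * D * sigma e l v.
  rewrite wdeg_sum // /sigma big_distrr; apply: eq_bigr => y evy; rewrite htr //; by rewrite mulnA.
exists s; split; [split => // x y exy|split; [|split]].
- rewrite !hw.
  have := pr x y exy; have dx := degD x; have dy := degD y.
  have gx := deg1 x y exy; have gy : 0 < deg e y by apply: (deg1 y x); rewrite e_sym.
  case: (ltngtP (sigma e l x) (sigma e l y)) => lt _ //.
  + have : 2 * D * sigma e l x + 2 * D <= 2 * D * sigma e l y.
      by rewrite addnC -mulnS leq_mul2l lt orbT.
    lia.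
  + have : 2 * D * sigma e l y + 2 * D <= 2 * D * sigma e l x.
      by rewrite addnC -mulnS leq_mul2l lt orbT.
    lia.
- rewrite (size_trS ps) /label_sum big_distrr; apply: eq_bigr => A /edgeP [a [b [eab ->]]].
  by rewrite trS_trav ?neq_of_e // htr // mulnA.
- move=> k bk; apply/bigmax_leqP => a _; apply/bigmax_leqP => b eab.
  by rewrite htr // mulnA leq_mul2l bk ?orbT // is_edge2.
- apply/bigmax_leqP => v _; rewrite hw leq_mul2l.
  by rewrite (leq_bigmax (F := sigma e l) v) orbT.
Qed.
End Walks.

Theorem theorem4p3 (T : finType) (e : rel T)
    (e_sym : symmetric e) (e_irr : irreflexive e) (G_nice : nice e) :
  (forall x, is_min_label_sum e x ->
     exists L, is_MLW e L /\ x <= L + size_m e <= 3 * (size_m e + maxdeg e * x)) /\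
  (forall k, is_chi_s e k ->
     exists M, is_MEW e M /\ k <= M + 1 <= 3 * (1 + maxdeg e * k)) /\
  (forall x, is_min_vertex_sum e x ->
     exists V, is_MVW e V /\ x <= V + maxdeg e <= 3 * maxdeg e * (1 + x)).
Proof.
have conn := G_nice.1.2.
have /card_gt0P [u _] := G_nice.1.1.
split; [|split].
- move=> x [[l [pl lx]] hmin].
  have [s [irs [sz _]]] := from_labelling e_sym e_irr conn u pl.
  have [L hL] := min_walk (fun _ s => size s) (ex_intro _ u (ex_intro _ s irs)).
  exists L; split; first exact: hL.
  have [[u' [s' [ir' sL]]] hL2] := hL.
  have h1 := hmin _ (lw_proper e_sym e_irr ir').
  rewrite (lw_sum ir'.1) sL in h1.
  have h2 := hL2 u s irs; rewrite /= sz lx -mulnA in h2.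
  apply/andP; split; lia.
- move=> k [[l [pl bl]] hmin].
  have [s [irs [_ [me _]]]] := from_labelling e_sym e_irr conn u pl.
  have [M hM] := min_walk (walk_maxedge e) (ex_intro _ u (ex_intro _ s irs)).
  exists M; split; first exact: hM.
  have [[u' [s' [ir' sM]]] hM2] := hM.
  have h1 := hmin _ _ (lw_proper e_sym e_irr ir') (lw_bounded e_irr ir'.1).
  rewrite sM in h1.
  have h2 := hM2 u s irs; have h3 := me k bl; rewrite -mulnA in h3.
  apply/andP; split; lia.
- move=> x [[l [pl lx]] hmin].
  have [s [irs [_ [_ mv]]]] := from_labelling e_sym e_irr conn u pl.
  have [V hV] := min_walk (fun u s => walk_maxvert u s) (ex_intro _ u (ex_intro _ s irs)).
  exists V; split; first exact: hV.
  have [[u' [s' [ir' sV]]] hV2] := hV.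
  have h1 := hmin _ (lw_proper e_sym e_irr ir').
  have h1' := lw_vsum e_sym e_irr ir'.1; rewrite /= in sV; rewrite sV in h1'.
  have h2 := hV2 u s irs; rewrite /= lx -mulnA in mv.
  apply/andP; split; first lia.
  have : V + maxdeg e <= 2 * (maxdeg e * x) + maxdeg e by lia.
  move=> h; apply: leq_trans h _; rewrite mulnDr muln1; lia.
Qed.
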